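(* Let $\eta\in\mathbb R_+^*$ and $R\in\mathbb R_+$. Let $\mathcal G^\star=(G^\star,\pi_\star,c_\star)\in\mathrm{LiftPMod}(\mathbb B,\mathcal C)$ with $G^\star=(V^\star,E^\star)$ and $w^\star\in\mathrm{Param}(\mathcal G^\star)$. Let $\alpha:V^\star\to(0,1]$, $\mathcal G=(G,\pi,c)\in\mathrm{LiftPMod}(\mathbb B,\mathcal C)$ and $w^0\in\mathrm{Param}(\mathcal G)$. Define $n:V_B\to\mathbb N$, $n_b=\#\pi^{-1}(b)$, and $d:E_B\to\mathbb N$, $d_{(a,b)}=\sup_{v\in\pi^{-1}(a)}\#(G(v,-)\cap\pi^{-1}(b))$. Assume $n_b\ge n_a\log n_a$ for all $(a,b)\in E_B$, and that there is $\Lambda\in\mathbb R_+$ with $\sup_{b\in V_B}\sum_{a\in B(-,b)}d_{(a,b)}\frac{n_a}{n_b}\le\Lambda$ and $\inf_{b\in V_B\setminus I_B}n_b\ge\frac{2R^2}{\eta^2}\frac{(1+\Lambda)^{\#V_B}}{\inf_{v\in V^\star}\alpha(v)}$. Then for every $w\in\mathrm{Param}(\mathcal G)$ with $\|w-w^0\|\le R$: if $\mathcal M^\alpha_\eta[(\mathcal G,w^0),(\mathcal G^\star,w^\star)]\ne\varnothing$ then $\mathcal M^{\alpha/2}_{2\eta}[(\mathcal G,w),(\mathcal G^\star,w^\star)]\ne\varnothing$.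
   Context: Graphs $G=(V,E)$, parents $G(-,v)$, children $G(v,-)$; homomorphisms (edge-preserving vertex maps, acting on edges componentwise); fibrations (homomorphisms restricting to bijections $G(-,v)\to H(-,\varphi(v))$). Perceptron module over a finite DAG $B=(V_B,E_B)$: $\mathbb B=((I_B,T_B),(\mathcal Y,\mathcal Z,\mathcal W),(M,\sigma))$, $I_B$ parentless vertices, $T_B\subseteq V_B$, finite-dimensional real inner product spaces $\mathcal Y_v,\mathcal Z_e,\mathcal W_e$, maps $M_{(u,v)}:\mathcal W_{(u,v)}\times\mathcal Y_u\to\mathcal Z_{(u,v)}$, $\sigma_v:\prod_{u\in B(-,v)}\mathcal Z_{(u,v)}\to\mathcal Y_v$. Fix $\mathbb B$, finite $\mathcal C$, $p_{\mathcal C}:\mathcal C\to I_B$. $\mathrm{LiftPMod}(\mathbb B,\mathcal C)$: triples $(G,\pi,c)$, $G=(V_G,E_G)$ a graph, $\pi:G\to B$ homomorphism, $c:\pi^{-1}(I_B)\to\mathcal C$ injective with $p_{\mathcal C}\circ c=\pi$ there; $\mathrm{Param}(\mathcal G)=\prod_{e\in E_G}\mathcal W_{\pi(e)}$ with norm $\|w\|^2=\sum_e\|w_e\|^2$. Morphism $(G,\pi_G,c_G)\to(H,\pi_H,c_H)$: fibration $\varphi$ with $\pi_G=\pi_H\circ\varphi$, $c_G=c_H\circ\varphi$. Partial morphism $(S,\varphi)$: subgraph $S$ of $G$ whose inclusion is a fibration, with a morphism $\varphi:(S,\pi_G|_S,c_G|_S)\to(H,\pi_H,c_H)$. $\mathcal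 M^\alpha_\eta[(\mathcal G,w_G),(\mathcal H,w_H)]$: set of partial morphisms with $\|(w_G)_e-(w_H)_{\varphi(e)}\|\le\eta$ for all edges $e$ of $S$ and $\#\varphi^{-1}(v)\ge\alpha(v)\#\pi_G^{-1}(\pi_H(v))$ for all $v\in V_H$. *)

(* Defs.v *)
From HB Require Import structures.
From mathcomp Require Import all_boot all_order all_algebra.
From mathcomp Require Import reals exp.
Set Implicit Arguments. Unset Strict Implicit. Unset Printing Implicit Defensive.
Import Order.TTheory GRing.Theory Num.Theory.
Local Open Scope ring_scope.

Definition is_dag (VB : finType) (EB : rel VB) : Prop :=
  forall a b, EB a b -> ~~ connect EB b a.

Definition parentless (VB : finType) (EB : rel VB) : {set VB} :=
  [set b | [forall a, ~~ EB a b]].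

Definition is_hom (V W : finType) (E : rel V) (F : rel W) (f : V -> W) : Prop :=
  forall u v, E u v -> F (f u) (f v).

Definition fibration_on (V W : finType) (S : {set V}) (ES : rel V) (F : rel W)
  (f : V -> W) : Prop :=
  forall v, v \in S ->
    {in [pred u | ES u v] &, injective f} /\
    (forall x, F x (f v) -> exists2 u, ES u v & f u = x).

(* (G, pi, c) ∈ LiftPMod(B, C); c is the partial map pi^{-1}(I_B) -> C,
   encoded as an option-valued function with domain exactly pi^{-1}(I_B). *)
Definition is_lift (VB : finType) (EB : rel VB) (C : finType) (pC : C -> VB)
  (V : finType) (E : rel V) (pi : V -> VB) (c : V -> option C) : Prop :=
  [/\ is_hom E EB pi,
      forall v, (pi v \in parentless EB) = (c v != None),
      forall v x, c v = Some x -> pC x = pi v &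
      forall u v, pi u \in parentless EB -> c u = c v -> u = v].

Definition fiber_card (V VB : finType) (pi : V -> VB) (b : VB) : nat :=
  #|[set v | pi v == b]|.

(* d_(a,b) = sup_{v ∈ pi^{-1}(a)} #(G(v,-) ∩ pi^{-1}(b))   (sup ∅ = 0) *)
Definition max_outdeg (V VB : finType) (E : rel V) (pi : V -> VB) (a b : VB) : nat :=
  \max_(v | pi v == a) #|[set x | E v x && (pi x == b)]|.

Section Param.
Variable R : realType.

(* W_(a,b) is modelled as the Euclidean space 'rV[R]_(dW a b) *)
Definition normW (k : nat) (x : 'rV[R]_k) : R := Num.sqrt (\sum_i x 0 i ^+ 2).

(* Param(G) = ∏_{e ∈ E_G} W_{pi(e)}, encoded as
   w : forall u v, 'rV_(dW (pi u) (pi v)); only values on edges matter. *)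
Definition param (VB : finType) (dW : VB -> VB -> nat) (V : finType) (pi : V -> VB)
  := forall u v : V, 'rV[R]_(dW (pi u) (pi v)).

Definition param_dist (VB : finType) (dW : VB -> VB -> nat) (V : finType) (E : rel V)
  (pi : V -> VB) (w w' : param dW pi) : R :=
  Num.sqrt (\sum_(u : V) \sum_(v : V | E u v) normW (w u v - w' u v) ^+ 2).

Definition in_M (VB : finType) (EB : rel VB) (C : finType) (dW : VB -> VB -> nat)
  (V : finType) (E : rel V) (pi : V -> VB) (c : V -> option C) (w : param dW pi)
  (H : finType) (F : rel H) (piH : H -> VB) (cH : H -> option C) (wH : param dW piH)
  (alpha : H -> R) (eta : R)
  (VS : {set V}) (ES : rel V) (phi : V -> H) : Prop :=
  [/\
      ((forall u v, ES u v -> [&& E u v, u \in VS & v \in VS]) /\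
       fibration_on VS ES E id),
      ((forall u v, ES u v -> F (phi u) (phi v)) /\ fibration_on VS ES F phi),
      (* compatibility with pi and c (c_S = c_G restricted to pi_S^{-1}(I_B)) *)
      ((forall v, v \in VS -> piH (phi v) = pi v) /\
       (forall v, v \in VS -> pi v \in parentless EB -> c v = cH (phi v))),
      (* weights: ||(w)_e - (wH)_phi(e)|| <= eta on every edge of S
         (the cast identifies W_{pi_H(phi e)} with W_{pi(e)}) *)
      (forall u v, ES u v ->
         forall h : dW (piH (phi u)) (piH (phi v)) = dW (pi u) (pi v),
           normW (w u v - castmx (erefl 1%N, h) (wH (phi u) (phi v))) <= eta) &
      forall x : H,
        alpha x * (#|[set v | pi v == piH x]|)%:R <= (#|[set v in VS | phi v == x]|)%:R].

Definition M_nonempty (VB : finType) (EB : rel VB) (C : finType) (dW : VB -> VB -> nat)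
  (V : finType) (E : rel V) (pi : V -> VB) (c : V -> option C) (w : param dW pi)
  (H : finType) (F : rel H) (piH : H -> VB) (cH : H -> option C) (wH : param dW piH)
  (alpha : H -> R) (eta : R) : Prop :=
  exists (VS : {set V}) (ES : rel V) (phi : V -> H),
    @in_M VB EB C dW V E pi c w H F piH cH wH alpha eta VS ES phi.

End Param.

(* Main.v *)
Require Import Defs.
From HB Require Import structures.
From mathcomp Require Import all_boot all_order all_algebra.
From mathcomp Require Import reals exp.
From mathcomp Require Import ring lra.
Import Order.TTheory GRing.Theory Num.Theory.
Local Open Scope ring_scope.

Lemma lagrange (R : realType) (n : nat) (a b : 'I_n -> R) :
  2 * ((\sum_i a i ^+ 2) * (\sum_i b i ^+ 2) - (\sum_i a i * b i) ^+ 2)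
  = \sum_i \sum_j (a i * b j - a j * b i) ^+ 2.
Proof.
have E1 : \sum_i \sum_j (a i * b j - a j * b i) ^+ 2 =
  \sum_i \sum_j (a i ^+ 2 * b j ^+ 2) + \sum_i \sum_j (a j ^+ 2 * b i ^+ 2)
  - 2 * \sum_i \sum_j ((a i * b i) * (a j * b j)).
  rewrite mulr_sumr -big_split -sumrB /=; apply: eq_bigr => i _.
  rewrite mulr_sumr -big_split -sumrB /=; apply: eq_bigr => j _; ring.
rewrite E1 [X in _ = _ + X - _]exchange_big /=.
rewrite -!big_distrlr /=.
rewrite expr2; ring.
Qed.

Lemma cauchy_schwarz (R : realType) (n : nat) (a b : 'I_n -> R) :
  (\sum_i a i * b i) ^+ 2 <= (\sum_i a i ^+ 2) * (\sum_i b i ^+ 2).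
Proof.
rewrite -subr_ge0 -(pmulr_rge0 _ (ltr0Sn R 1)) lagrange.
by apply: sumr_ge0 => i _; apply: sumr_ge0 => j _; exact: sqr_ge0.
Qed.

Lemma normW_ge0 (R : realType) k (x : 'rV[R]_k) : 0 <= normW x.
Proof. exact: sqrtr_ge0. Qed.

Lemma normW_triangle (R : realType) k (y z : 'rV[R]_k) :
  normW (y + z) <= normW y + normW z.
Proof.
rewrite /normW.
set A := \sum_i y 0 i ^+ 2; set B := \sum_i z 0 i ^+ 2.
have A0 : 0 <= A by apply: sumr_ge0 => i _; exact: sqr_ge0.
have B0 : 0 <= B by apply: sumr_ge0 => i _; exact: sqr_ge0.
have -> : \sum_i (y + z) 0 i ^+ 2 = A + B + 2 * \sum_i y 0 i * z 0 i.
  rewrite /A /B mulr_sumr -!big_split /=; apply: eq_bigr => i _.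
  rewrite mxE; ring.
have CS : \sum_i y 0 i * z 0 i <= Num.sqrt A * Num.sqrt B.
  rewrite -sqrtrM //; apply: le_trans (ler_norm _) _.
  rewrite -sqrtr_sqr; apply: ler_wsqrtr; exact: cauchy_schwarz.
have S0 : 0 <= Num.sqrt A + Num.sqrt B by apply: addr_ge0; apply: sqrtr_ge0.
rewrite -[X in _ <= X]ger0_norm // -sqrtr_sqr ler_sqrt; last exact: sqr_ge0.
rewrite sqrrD !sqr_sqrtr //.
have := CS; lra.
Qed.

Lemma card_bigcup_le (I T : finType) (P : pred I) (A : I -> {set T}) :
  (#|\bigcup_(i | P i) A i| <= \sum_(i | P i) #|A i|)%N.
Proof.
apply: (big_ind2 (fun (S : {set T}) n => (#|S| <= n)%N)) => //.
- by rewrite cards0.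
- move=> S1 n1 S2 n2 h1 h2; rewrite cardsU; apply: leq_trans (leq_subr _ _) _.
  exact: leq_add.
Qed.

Definition anc (VB : finType) (EB : rel VB) (b : VB) : {set VB} :=
  [set x | connect EB x b && (x != b)].

Arguments anc {VB}.

Lemma anc_lt (VB : finType) (EB : rel VB) (hdag : is_dag EB) a b :
  EB a b -> (#|anc EB a| < #|anc EB b|)%N.
Proof.
move=> hab; apply: proper_card; apply/properP; split.
- apply/subsetP => x; rewrite !inE => /andP[hxa _].
  rewrite (connect_trans hxa (connect1 hab)) /=.
  apply/eqP => exb; subst x; by move: (hdag _ _ hab); rewrite hxa.
- exists a; last by rewrite !inE eqxx andbF.
  rewrite !inE connect1 //=; apply/eqP => eab; subst a.
  by move: (hdag _ _ hab); rewrite connect0.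
Qed.

Lemma anc_max (VB : finType) (EB : rel VB) b : (#|anc EB b| < #|VB|)%N.
Proof.
rewrite -cardsT; apply: proper_card; apply/properP; split; first exact: subsetT.
by exists b; rewrite !inE ?eqxx ?andbF.
Qed.

Lemma connect_last (V : finType) (E : rel V) t v :
  connect E t v -> t != v -> exists2 u, connect E t u & E u v.
Proof.
move=> /connectP[p hp ->]; elim/last_ind: p hp => [|p y _] /=.
  by rewrite eqxx.
rewrite rcons_path last_rcons => /andP[hp he] _.
by exists (last t p) => //; apply/connectP; exists p.
Qed.
Arguments connect_last {V E t v}.
Arguments anc_lt {VB EB} hdag {a b}.
Arguments card_bigcup_le {I T}.

Theorem lemma2 (R : realType)
  (* the base DAG B, the spaces W_e (by their dimensions), C and p_C *)
  (VB : finType) (EB : rel VB) (hdag : is_dag EB)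
  (dW : VB -> VB -> nat)
  (C : finType) (pC : C -> VB) (hpC : forall x, pC x \in parentless EB)
  (* parameters *)
  (eta Rr : R) (heta : 0 < eta) (hRr : 0 <= Rr)
  (* the target lift G^star = (G^star, pi^star, c^star) and w^star *)
  (Vs : finType) (Es : rel Vs) (pis : Vs -> VB) (cs : Vs -> option C)
  (hGs : @is_lift VB EB C pC Vs Es pis cs) (ws : param R dW pis)
  (alpha : Vs -> R) (halpha : forall v, 0 < alpha v <= 1)
  (* G = (G, pi, c) and w0 *)
  (V : finType) (E : rel V) (pi : V -> VB) (c : V -> option C)
  (hG : @is_lift VB EB C pC V E pi c) (w0 : param R dW pi)
  (hlog : forall a b, EB a b ->
     (fiber_card pi a)%:R * ln ((fiber_card pi a)%:R : R) <= (fiber_card pi b)%:R)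
  (Lambda : R) (hLambda : 0 <= Lambda)
  (hsum : forall b : VB,
     \sum_(a | EB a b) (max_outdeg E pi a b)%:R * (fiber_card pi a)%:R
                         / (fiber_card pi b)%:R <= Lambda)
  (hinf : forall b : VB, b \notin parentless EB -> forall v : Vs,
     2 * Rr ^+ 2 / eta ^+ 2 * (1 + Lambda) ^+ #|VB| / alpha v
       <= (fiber_card pi b)%:R) :
  forall w : param R dW pi, @param_dist R VB dW V E pi w w0 <= Rr ->
    @M_nonempty R VB EB C dW V E pi c w0 Vs Es pis cs ws alpha eta ->
    @M_nonempty R VB EB C dW V E pi c w Vs Es pis cs ws
      (fun v => alpha v / 2) (2 * eta).
Proof.
move=> w hdist [VS [ES [phi [[hES hfibS] [hhom hfib] [hpi hc] hw hcnt]]]].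
case: hG => hhomG _ _ _.
pose bad u v := eta < normW (w u v - w0 u v).
pose T := [set t in VS | [exists u, E u t && bad u t]].
pose X := [set v | [exists t in T, connect E t v]].
pose VS' := [set v in VS | v \notin X].
have closeX : forall u v, E u v -> u \in X -> v \in X.
  move=> u v huv; rewrite !inE => /existsP[t /andP[ht htu]].
  apply/existsP; exists t; rewrite ht /=; exact: connect_trans htu (connect1 huv).
have parent : forall u v, v \in VS -> E u v -> ES u v /\ u \in VS.
  move=> u v hv huv; have [_ /(_ u huv) [u' hu' /= eu]] := hfibS v hv.
  subst u'; split => //; by have /and3P[_ ? _] := hES _ _ hu'.
have parentX : forall u v, v \in VS' -> E u v -> ES u v /\ u \in VS'.
  move=> u v; rewrite inE => /andP[hv hvX] huv; have [h1 h2] := parent u v hv huv.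
  split => //; rewrite inE h2 /=; apply: contra hvX; exact: closeX.
exists VS', (fun u v => [&& ES u v, u \in VS' & v \in VS']), phi.
have VS'VS : forall v, v \in VS' -> v \in VS by move=> v; rewrite inE => /andP[].
split.
- split.
  + by move=> u v /and3P[/hES /and3P[-> _ _] -> ->].
  + move=> v hv; split; first by move=> ? ? _ _.
    move=> x hxv; have [h1 h2] := parentX x v hv hxv.
    by exists x => //; rewrite h1 h2 hv.
- split.
  + by move=> u v /and3P[/hhom].
  + move=> v hv; have [hinj hsurj] := hfib v (VS'VS v hv); split.
      move=> u1 u2; rewrite !inE => /and3P[h1 _ _] /and3P[h2 _ _].
      by apply: hinj; rewrite inE.
    move=> y /hsurj [u hu <-]; exists u => //.
    have /and3P[huv _ _] := hES _ _ hu.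
    have [_ h2] := parentX u v hv huv.
    by rewrite hu h2 hv.
- split; first by move=> v /VS'VS /hpi.
  by move=> v /VS'VS /hc.
- move=> u v /and3P[hu _ hv] h.
  have hgood : normW (w u v - w0 u v) <= eta.
    rewrite leNgt; apply/negP => hb.
    move: hv; rewrite inE => /andP[hvVS]; apply/negP; rewrite negbK.
    rewrite inE; apply/existsP; exists v; rewrite connect0 andbT inE hvVS /=.
    apply/existsP; exists u; rewrite /bad hb andbT.
    by have /and3P[] := hES _ _ hu.
  have := hw u v hu h.
  have := @normW_triangle R _ (w u v - w0 u v) (w0 u v - castmx (erefl 1%N, h) (ws (phi u) (phi v))).
  rewrite addrA subrK; lra.
- move=> x.
  pose Y b := [set v in VS | (v \in X) && (pi v == b)].
  pose n b := fiber_card pi b.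
  pose Kc := (\sum_u #|[set v | E u v && bad u v]|)%N.
  have hK : Kc%:R * eta ^+ 2 <= Rr ^+ 2.
    have hs : \sum_u \sum_(v | E u v) normW (w u v - w0 u v) ^+ 2 <= Rr ^+ 2.
      set S := (\sum_u _).
      have S0 : 0 <= S.
        by apply: sumr_ge0 => u _; apply: sumr_ge0 => v _; exact: sqr_ge0.
      move: hdist; rewrite /param_dist -/S => h.
      rewrite -(sqr_sqrtr S0); have := sqrtr_ge0 S; nra.
    apply: le_trans hs; rewrite natr_sum mulr_suml; apply: ler_sum => u _.
    rewrite mulr_natl -sumr_const big_mkcond [X in _ <= X]big_mkcond /=.
    apply: ler_sum => v _; rewrite inE /bad.
    case: (E u v) => /=; last by [].
    case: ifP => hb; last exact: sqr_ge0.
    have := @normW_ge0 R _ (w u v - w0 u v); nra.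
  have hT : (#|T| <= Kc)%N.
    have hsub : T \subset \bigcup_u [set v | E u v && bad u v].
      apply/subsetP => v; rewrite inE => /andP[_ /existsP[u hu]].
      by apply/bigcupP; exists u => //; rewrite inE.
    apply: leq_trans (subset_leq_card hsub) _; have := card_bigcup_le xpredT (fun u => [set v | E u v && bad u v]); exact.
  have hTb : forall b, (#|[set v in T | pi v == b]| <=
                        (if b \in parentless EB then 0 else Kc))%N.
    move=> b; case: ifP => hb.
      rewrite leqn0 cards_eq0; apply/eqP/setP => v; rewrite !inE.
      apply/negP => /andP[/andP[_ /existsP[u /andP[huv _]]] /eqP hpv].
      move: hb; rewrite inE => /forallP /(_ (pi u)); by rewrite -hpv (hhomG _ _ huv).
    apply: leq_trans hT; apply: subset_leq_card; apply/subsetP => v.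
    by rewrite inE => /andP[-> _].
  have hrec : forall b, (#|Y b| <= #|[set v in T | pi v == b]| +
                 \sum_(a | EB a b) max_outdeg E pi a b * #|Y a|)%N.
    move=> b.
    have sub : Y b \subset [set v in T | pi v == b] :|:
        \bigcup_(a | EB a b) \bigcup_(u in Y a) [set y | E u y && (pi y == b)].
      apply/subsetP => v; rewrite inE => /and3P[hvVS hvX /eqP hpv].
      move: (hvX); rewrite inE => /existsP[t /andP[ht htv]].
      rewrite inE; case: (eqVneq t v) => [etv | ntv].
        by subst t; rewrite inE ht hpv eqxx.
      apply/orP; right.
      have [u htu huv] := connect_last htv ntv.
      have [_ huVS] := parent u v hvVS huv.
      apply/bigcupP; exists (pi u); first by rewrite -hpv; exact: hhomG.
      apply/bigcupP; exists u.
        rewrite inE huVS eqxx andbT inE; apply/existsP; exists t; by rewrite ht htu.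
      by rewrite inE huv hpv eqxx.
    apply: leq_trans (subset_leq_card sub) _; rewrite cardsU.
    apply: leq_trans (leq_subr _ _) _.
    rewrite leq_add2l; apply: leq_trans (card_bigcup_le _ _) _.
    apply: leq_sum => a hab.
    apply: leq_trans (card_bigcup_le _ _) _.
    rewrite mulnC -sum_nat_const; apply: leq_sum => u.
    rewrite inE => /and3P[_ _ /eqP hpu]; rewrite /max_outdeg.
    by apply: (leq_bigmax_cond (P := fun v => pi v == a) (F := fun v => #|[set y | E v y && (pi y == b)]|)); rewrite hpu.
  pose a0 := alpha x.
  have a0pos : 0 < a0 by have /andP[] := halpha x.
  pose P := (1 + Lambda) ^+ #|VB|.
  have Ppos : 0 < P by apply: exprn_gt0; lra.
  pose eps := a0 / (2 * P).
  have eps0 : 0 <= eps by apply: divr_ge0; [lra | nra].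
  have hKb : forall b, b \notin parentless EB -> Kc%:R <= eps * (n b)%:R.
    move=> b hb; have := hinf b hb x => h.
    have e1 : Kc%:R <= Rr ^+ 2 / eta ^+ 2 by rewrite ler_pdivlMr ?exprn_gt0.
    have e2 : Rr ^+ 2 / eta ^+ 2 = eps * (2 * Rr ^+ 2 / eta ^+ 2 * P / a0).
      rewrite /eps; field; by rewrite !gt_eqF.
    rewrite e2 in e1; apply: le_trans e1 _; exact: ler_wpM2l.
  have claim : forall t b, (#|anc EB b| < t)%N ->
      (#|Y b|)%:R <= eps * (1 + Lambda) ^+ t * (n b)%:R.
    elim=> [|t IH] b hbt; first by [].
    have hYn : (#|Y b| <= n b)%N.
      apply: subset_leq_card; apply/subsetP => v; rewrite !inE => /and3P[_ _ ->].
      by [].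
    case: (posnP (n b)) => [nb0|nbpos].
      by move: hYn; rewrite nb0 leqn0 => /eqP ->; rewrite mulr0.
    have step1 : (#|Y b|)%:R <= (if b \in parentless EB then 0 else Kc)%:R +
        \sum_(a | EB a b) (max_outdeg E pi a b)%:R * (#|Y a|)%:R :> R.
      have := leq_trans (hrec b) (leq_add (hTb b) (leqnn _)).
      rewrite -(@ler_nat R) natrD natr_sum => h; apply: le_trans h _.
      by under eq_bigr do rewrite natrM.
    have hterm : (if b \in parentless EB then 0 else Kc)%:R <= eps * (n b)%:R.
      case: ifP => hb; first by rewrite mulr_ge0.
      by apply: hKb; rewrite hb.
    have Q0 : 0 <= (1 + Lambda) ^+ t by apply: exprn_ge0; lra.
    have hsum' : \sum_(a | EB a b) (max_outdeg E pi a b)%:R * (#|Y a|)%:R <=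
        eps * (1 + Lambda) ^+ t *
        \sum_(a | EB a b) (max_outdeg E pi a b)%:R * (n a)%:R.
      rewrite mulr_sumr; apply: ler_sum => a hab.
      have := IH a (leq_trans (anc_lt hdag hab) hbt) => h.
      rewrite mulrCA; apply: ler_wpM2l => //.
    have hsb : \sum_(a | EB a b) (max_outdeg E pi a b)%:R * (n a)%:R
               <= Lambda * (n b)%:R.
      by have := hsum b; rewrite -mulr_suml ler_pdivrMr // ltr0n.
    have Q1 : 1 <= (1 + Lambda) ^+ t by apply: exprn_ege1; lra.
    have n0 : 0 <= (n b)%:R :> R by [].
    have h1 := ler_wpM2l (mulr_ge0 eps0 Q0) hsb.
    have Q1' : 0 <= (1 + Lambda) ^+ t - 1 by rewrite subr_ge0.
    have h2 := mulr_ge0 (mulr_ge0 eps0 n0) Q1'.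
    rewrite exprS.
    set Q := (1 + Lambda) ^+ t in Q0 Q1 Q1' hsum' h1 h2 *.
    nra.
  have hY : (#|Y (pis x)|)%:R <= a0 / 2 * (n (pis x))%:R.
    have := claim #|VB| (pis x) (@anc_max _ EB (pis x)).
    have -> : eps * (1 + Lambda) ^+ #|VB| = a0 / 2.
      rewrite /eps -/P; field; by rewrite !gt_eqF.
    by [].
  have hsplit : (#|[set v in VS | phi v == x]| <=
                 #|[set v in VS' | phi v == x]| + #|Y (pis x)|)%N.
    apply: leq_trans (_ : #|[set v in VS' | phi v == x] :|: Y (pis x)| <= _)%N;
      last by rewrite cardsU leq_subr.
    apply: subset_leq_card; apply/subsetP => v; rewrite !inE => /andP[hv hpx].
    rewrite -(hpi v hv) (eqP hpx) eqxx hv /= !andbT.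
    by rewrite eqxx andbT orNb.
  have := hcnt x; rewrite /n /fiber_card in hY.
  move: hsplit; rewrite -(@ler_nat R) natrD => hs.
  rewrite -/a0; lra.
Qed.
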